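(* Let $p,m,n\ge1$, let $a_1,\dots,a_n\in\mathbb{C}$ be distinct, let $m_1,\dots,m_n\ge1$ be integers, let $C_0,\dots,C_{m-1}$, $B_k^{(j)}$ be complex $p\times p$ matrices, let $\|\cdot\|$ be any induced matrix norm, and let $$R(\lambda)=I\lambda^m-C_{m-1}\lambda^{m-1}-\cdots-C_1\lambda-C_0+\sum_{j=1}^{n}\sum_{k=1}^{m_j}\frac{B_k^{(j)}}{(\lambda-a_j)^k}.$$ If $\lambda_0$ is an eigenvalue of $R(\lambda)$, then: (1) $|\lambda_0|\le\max_{1\le j\le n}\Big\{1+|a_j|,\ \sum_{j=1}^n\sum_{k=1}^{m_j}\|B_k^{(j)}\|+\sum_{i=0}^{m-1}\|C_i\|\Big\}$; (2) if every $m_j=1$ (writing $B^{(j)}=B^{(j)}_1$), then $|\lambda_0|\le\max_{1\le j\le n,\,1\le i\le m-1}\{|a_j|+\|B^{(j)}\|,\ 1+\|C_i\|,\ \|C_0\|+n\}$; otherwise $|\lambda_0|\le\max_{1\le j\le n,\,1\le k\le m_j,\,1\le i\le m-1}\Big\{|a_j|+\|B_k^{(j)}\|,\ 1+|a_j|,\ 1+\|C_i\|,\ \|C_0\|+\sum_{j=1}^n m_j\Big\}$; (3) $|\lambda_0|\le\frac{\alpha+\beta+\sqrt{(\alpha-\beta)^2+(\gamma+\delta)^2}}{2}$, where $\alpha=\max_{1\le j\le n}\{|a_j|+\cos(\frac{\pi}{m_j+1})\}$, $\beta=w(\mathcal{B}_0)$, $\gamma=\sqrt{\sum_{j=1}^n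 m_j}$, $\delta=\sqrt{\sum_{j=1}^n\sum_{k=1}^{m_j}\|B_k^{(j)}\|^2}$, and $\mathcal{B}_0$ is the $m\times m$ real matrix with $1$'s on the superdiagonal, last row $(\|C_0\|,\|C_1\|,\dots,\|C_{m-1}\|)$, and zeros elsewhere.
   Context: A scalar $\lambda_0\in\mathbb{C}\setminus\{a_1,\dots,a_n\}$ is an eigenvalue of $R(\lambda)$ if there is a nonzero $v\in\mathbb{C}^p$ with $R(\lambda_0)v=0$. For a square complex matrix $A$, $w(A)=\sup\{|x^*Ax|:x^*x=1\}$ is its numerical radius. *)

(* Defs.v *)
From HB Require Import structures.
From mathcomp Require Import all_boot all_order all_algebra.
From mathcomp Require Import complex.
From mathcomp Require Import classical_sets reals trigo.

Set Implicit Arguments.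
Unset Strict Implicit.
Unset Printing Implicit Defensive.

Import Order.TTheory GRing.Theory Num.Theory.
Local Open Scope ring_scope.
Local Open Scope classical_set_scope.

Section Defs.
Variable R : realType.

Definition cabs (z : R[i]) : R := ComplexField.Normc.normc z.

Definition is_vnorm (p : nat) (nu : 'cV[R[i]]_p -> R) : Prop :=
  [/\ (forall x, 0 <= nu x),
      (forall x, nu x = 0 -> x = 0),
      (forall (c : R[i]) x, nu (c *: x) = cabs c * nu x) &
      (forall x y, nu (x + y) <= nu x + nu y)].

Definition induced_norm (p : nat) (nu : 'cV[R[i]]_p -> R) (A : 'M[R[i]]_p) : R :=
  sup [set r : R | exists x : 'cV[R[i]]_p, nu x = 1 /\ r = nu (A *m x)].

Definition ctrmx (p q : nat) (A : 'M[R[i]]_(p, q)) : 'M[R[i]]_(q, p) :=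
  (map_mx (@conjc R) A)^T.

Definition numrad (q : nat) (A : 'M[R[i]]_q) : R :=
  sup [set r : R | exists x : 'cV[R[i]]_q,
         (ctrmx x *m x) 0 0 = 1 /\ r = cabs ((ctrmx x *m A *m x) 0 0)].

Definition Rmat (p m n : nat) (C : 'I_m -> 'M[R[i]]_p) (a : 'I_n -> R[i])
  (mj : 'I_n -> nat) (B : 'I_n -> nat -> 'M[R[i]]_p) (lam : R[i]) : 'M[R[i]]_p :=
  lam ^+ m *: 1%:M - \sum_(i < m) lam ^+ i *: C i
  + \sum_(j < n) \sum_(1 <= k < (mj j).+1) (lam - a j) ^- k *: B j k.

Definition is_eigenvalue (p m n : nat) (C : 'I_m -> 'M[R[i]]_p) (a : 'I_n -> R[i])
  (mj : 'I_n -> nat) (B : 'I_n -> nat -> 'M[R[i]]_p) (lam0 : R[i]) : Prop :=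
  (forall j, lam0 != a j) /\
  exists v : 'cV[R[i]]_p, v != 0 /\ Rmat C a mj B lam0 *m v = 0.

Definition compB0 (m : nat) (c : 'I_m -> R) : 'M[R]_m :=
  \matrix_(i < m, j < m)
     (if i.+1 == m then c j else if j == i.+1 :> nat then 1 else 0).

Definition rC (r : R) : R[i] := (r%:C)%C.

End Defs.

(* Main.v *)
Require Import Defs.
From HB Require Import structures.
From mathcomp Require Import all_boot all_order all_algebra.
From mathcomp Require Import complex.
From mathcomp Require Import classical_sets reals trigo.
From mathcomp Require Import ring lra.
From mathcomp Require Import boolp topology normedtype derive matrix_normedtype.
Import Order.TTheory GRing.Theory Num.Theory.
Import numFieldNormedType.Exports.
Local Open Scope ring_scope.

Set Implicit Arguments.
Unset Strict Implicit.

Section S.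
Variable R : realType.
Implicit Types z w : R[i].

Lemma cabs_ge0 z : 0 <= cabs z.
Proof. by case: z => a b; rewrite /cabs /= sqrtr_ge0. Qed.
Lemma cabsM z w : cabs (z * w) = cabs z * cabs w.
Proof. exact: ComplexField.Normc.normcM. Qed.
Lemma cabsV z : cabs (z^-1) = (cabs z)^-1.
Proof. exact: ComplexField.Normc.normcV. Qed.
Lemma cabsD z w : cabs (z + w) <= cabs z + cabs w.
Proof. exact: le_normcD. Qed.
Lemma cabsN z : cabs (- z) = cabs z.
Proof. exact: (@normcN R). Qed.
Lemma cabs0 : cabs (0 : R[i]) = 0.
Proof. exact: ComplexField.Normc.normc0. Qed.
Lemma cabs1 : cabs (1 : R[i]) = 1.
Proof. exact: ComplexField.Normc.normc1. Qed.
Lemma cabs_eq0 z : cabs z = 0 -> z = 0.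
Proof. exact: ComplexField.Normc.eq0_normc. Qed.
Lemma cabsX z k : cabs (z ^+ k) = cabs z ^+ k.
Proof. by elim: k => [|k IH]; rewrite ?expr0 ?cabs1 // !exprS cabsM IH. Qed.
Lemma cabs_real (r : R) : cabs (rC r) = `|r|.
Proof. by rewrite /cabs /rC /= expr0n /= addr0 sqrtr_sqr. Qed.
Lemma cabsB z w : cabs z - cabs w <= cabs (z - w).
Proof. by rewrite lerBlDr; apply: le_trans (cabsD _ _); rewrite subrK. Qed.
Lemma cabs_le (a b : R) : cabs (a +i* b)%C <= `|a| + `|b|.
Proof.
rewrite /cabs /= -(@ler_pXn2r _ 2) ?nnegrE ?sqrtr_ge0 ?addr_ge0 //.
rewrite sqr_sqrtr ?addr_ge0 ?sqr_ge0 // sqrrD.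
rewrite -(real_normK (num_real a)) -(real_normK (num_real b)).
rewrite lerD2r ler_wpDr // mulrn_wge0 // mulr_ge0 //.
Qed.
End S.

Section VN.
Variables (R : realType) (p : nat) (nu : 'cV[R[i]]_p -> R) (hnu : is_vnorm nu).

Lemma nu_ge0 x : 0 <= nu x. Proof. by case: hnu. Qed.
Lemma nuZ c x : nu (c *: x) = cabs c * nu x. Proof. by case: hnu. Qed.
Lemma nuD x y : nu (x + y) <= nu x + nu y. Proof. by case: hnu. Qed.
Lemma nu_eq0 x : nu x = 0 -> x = 0. Proof. by case: hnu => _ H _ _; exact: H. Qed.
Lemma nu0 : nu 0 = 0.
Proof. by rewrite -(scale0r (0 : 'cV[R[i]]_p)) nuZ cabs0 mul0r. Qed.
Lemma nuN x : nu (- x) = nu x.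
Proof. by rewrite -scaleN1r nuZ cabsN cabs1 mul1r. Qed.
Lemma nu_sum (I : Type) (r : seq I) (P : pred I) (F : I -> 'cV[R[i]]_p) :
  nu (\sum_(i <- r | P i) F i) <= \sum_(i <- r | P i) nu (F i).
Proof.
apply: (big_rec2 (fun a b => nu a <= b)); first by rewrite nu0.
by move=> i y1 y2 _ H; apply: le_trans (nuD _ _) _; rewrite lerD2l.
Qed.
Lemma nu_dist x y : `|nu x - nu y| <= nu (x - y).
Proof.
have h1 := nuD (x - y) y; rewrite subrK in h1.
have h2 := nuD (y - x) x; rewrite subrK -opprB nuN in h2.
rewrite ler_norml; apply/andP; split; lra.
Qed.
Lemma nu_coord z : nu z <= \sum_i cabs (z i 0) * nu (delta_mx i 0).
Proof.
rewrite {1}(matrix_sum_delta z). apply: le_trans (nu_sum _ _ _) _.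
by apply: ler_sum => i _; rewrite big_ord1 nuZ.
Qed.
End VN.

Section NE.
Variables (R : realType) (p : nat).

Definition toC (y : 'rV[R]_(p + p)) : 'cV[R[i]]_p :=
  \col_i ((y 0 (lshift p i)) +i* (y 0 (rshift p i)))%C.
Definition fromC (z : 'cV[R[i]]_p) : 'rV[R]_(p + p) :=
  row_mx (\row_i complex.Re (z i 0)) (\row_i complex.Im (z i 0)).

Lemma toCK z : toC (fromC z) = z.
Proof.
apply/matrixP => i j; rewrite mxE row_mxEl row_mxEr !mxE (ord1 j).
by case: (z i 0).
Qed.

Lemma toCB y w : toC (y - w) = toC y - toC w.
Proof. by apply/matrixP => i j; rewrite !mxE. Qed.

Lemma toCZ (t : R) y : toC (t *: y) = rC t *: toC y.
Proof. by apply/matrixP => i j; rewrite !mxE /rC /=; congr Complex; lra. Qed.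

Lemma toC_eq0 y : toC y = 0 -> y = 0.
Proof.
move=> /matrixP H; apply/matrixP => i j; rewrite (ord1 i) mxE -(splitK j).
by case: (split j) => k /=; have := H k 0; rewrite !mxE; case.
Qed.

Lemma coord_le (y : 'rV[R]_(p + p)) j : `|y 0 j| <= `|y|.
Proof.
rewrite [leRHS]/Num.norm /= mx_normrE.
exact: (le_bigmax _ (fun ij : 'I_1 * 'I_(p + p) => `|y ij.1 ij.2|) (0, j)).
Qed.

Lemma cabs_toC y i : cabs (toC y i 0) <= 2 * `|y|.
Proof.
rewrite mxE; apply: le_trans (cabs_le _ _) _.
by rewrite mulr2n mulrDl mul1r lerD ?coord_le.
Qed.

End NE.

Section NE2.
Variables (R : realType) (p : nat) (nu : 'cV[R[i]]_p -> R) (hnu : is_vnorm nu).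

Let g (y : 'rV[R]_(p + p)) := nu (toC y).
Let K := 2 * \sum_i nu (delta_mx i 0 : 'cV[R[i]]_p).

Lemma K_ge0 : 0 <= K.
Proof. by rewrite /K mulr_ge0 // sumr_ge0 // => i _; apply: nu_ge0. Qed.

Lemma g_le y : g y <= K * `|y|.
Proof.
rewrite /g; apply: le_trans (nu_coord hnu _) _.
apply: le_trans (_ : _ <= \sum_i (2 * `|y|) * nu (delta_mx i 0 : 'cV[R[i]]_p)) _.
  apply: ler_sum => i _; apply: ler_wpM2r; first exact: nu_ge0.
  exact: cabs_toC.
by rewrite -big_distrr /= /K mulrAC.
Qed.

Lemma g_cont : continuous g.
Proof.
move=> y; apply/(@cvgrPdist_lt _ R^o _ _ (@nbhs_filter _ y)) => e e0.
have Kp : 0 < e / (K + 1) by rewrite divr_gt0 // ltr_wpDl // K_ge0.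
apply: filterS (@cvgr_dist_lt _ 'rV[R]_(p + p) _ (nbhs y) _ id y (@cvg_id _ _) _ Kp).
move=> t /= Hyt.
have h1 := nu_dist hnu (toC y) (toC t); rewrite -toCB in h1.
have h2 := g_le (y - t).
have h3 : K * `|y - t| <= K * (e / (K + 1)) by rewrite ler_wpM2l ?K_ge0 // ltW.
have h4 : K * (e / (K + 1)) < e.
  have K1 : 0 < K + 1 by rewrite ltr_wpDl // K_ge0.
  rewrite mulrA ltr_pdivrMr //; have := K_ge0; nra.
rewrite /g; apply: le_lt_trans h1 _; apply: le_lt_trans h2 _; exact: le_lt_trans h3 h4.
Qed.

Lemma toC0 : toC (0 : 'rV[R]_(p + p)) = 0.
Proof. by rewrite -(subrr (0 : 'rV[R]_(p + p))) toCB subrr. Qed.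

Lemma nu_equiv : (0 < p)%N -> exists2 k : R, 0 < k & forall (z : 'cV[R[i]]_p) (i : 'I_p), cabs (z i 0) <= k * nu z.
Proof.
move=> hp.
pose A := [set y : 'rV[R]_(p + p) | `|y| = 1]%classic.
have A0 : (A !=set0)%classic.
  pose y1 : 'rV[R]_(p + p) := const_mx 1.
  have y1n0 : y1 != 0.
    apply/eqP => /matrixP /(_ 0 (lshift p (Ordinal hp))); rewrite !mxE => /eqP.
    by rewrite oner_eq0.
  exists (`|y1|^-1 *: y1); rewrite /A /= normrZ normfV normr_id mulVf //.
  by rewrite normr_eq0.
have cA : compact A.
  apply: bounded_closed_compact.
    apply: filterS (nbhs_pinfty_ge (num_real (1 : R))) => M M1 y /= Ay.
    by rewrite Ay.
  have := @preimage_closed _ _ (@Num.norm _ 'rV[R]_(p + p)) [set x : R | x = 1].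
  apply; last exact: closed_eq.
  by move=> x _; apply: norm_continuous.
have [c cA' cmin] := compact_EVT_min A0 cA (@continuous_subspaceT _ _ A g g_cont).
have cA1 : `|c| = 1 by move: cA'; rewrite inE.
have m0p : 0 < g c.
  rewrite lt_def nu_ge0 // andbT; apply/eqP => /(nu_eq0 hnu) /toC_eq0 c0.
  by move: cA1; rewrite c0 normr0 => /eqP; rewrite eq_sym oner_eq0.
exists (2 / g c); first by rewrite divr_gt0.
move=> z i.
have [->|zn0] := eqVneq z 0.
  by rewrite mxE cabs0 mulr_ge0 ?nu_ge0 // divr_ge0 // ltW.
pose y := fromC z.
have yn0 : y != 0 by apply: contra zn0 => /eqP y0; rewrite -(toCK z) -/y y0 toC0.
have nyp : 0 < `|y| by rewrite normr_gt0.
have tA : (`|y|^-1 *: y) \in A.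
  by rewrite inE /A /= normrZ normfV normr_id mulVf // gt_eqF.
have := cmin _ tA; rewrite /g toCZ toCK nuZ // cabs_real ger0_norm ?invr_ge0 ?normr_ge0 //.
move=> Hc.
have Hc' : g c * `|y| <= nu z.
  by rewrite -ler_pdivlMr // mulrC.
rewrite -{1}(toCK z) -/y; apply: le_trans (cabs_toC _ _) _.
rewrite /g in Hc' *; have -> : 2 / nu (toC c) * nu z = 2 * (nu z / nu (toC c)) by rewrite mulrAC mulrA.
by rewrite ler_wpM2l // ler_pdivlMr // mulrC.
Qed.

Lemma induced_ub : (0 < p)%N -> forall (M : 'M[R[i]]_p) z,
  nu (M *m z) <= induced_norm nu M * nu z.
Proof.
move=> hp M z; have [k kp Hk] := nu_equiv hp.
pose KM := \sum_i k * nu (M *m delta_mx i 0).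
have HM : forall x, nu (M *m x) <= KM * nu x.
  move=> x; rewrite {1}(matrix_sum_delta x) mulmx_sumr.
  apply: le_trans (nu_sum hnu _ _ _) _; rewrite /KM mulr_suml.
  apply: ler_sum => i _; rewrite big_ord1 -scalemxAr nuZ // mulrAC.
  by rewrite ler_wpM2r ?nu_ge0 // Hk.
have [->|zn0] := eqVneq z 0.
  by rewrite mulmx0 nu0 // mulr0.
have nzp : 0 < nu z.
  by rewrite lt_def nu_ge0 // andbT; apply: contra zn0 => /eqP /(nu_eq0 hnu) ->.
pose z' := rC (nu z)^-1 *: z.
have nz' : nu z' = 1 by rewrite nuZ // cabs_real ger0_norm ?invr_ge0 ?(nu_ge0 hnu) // mulVf ?gt_eqF.
have : nu (M *m z') <= induced_norm nu M.
  apply: ub_le_sup; last by exists z'.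
  exists KM => r [x [x1 ->]]; by rewrite -[KM]mulr1 -x1 HM.
rewrite -scalemxAr nuZ // cabs_real ger0_norm ?invr_ge0 ?(nu_ge0 hnu) // => H.
by rewrite -ler_pdivrMr // mulrC.
Qed.
End NE2.

Section Real.
Variable R : realType.

Lemma poly_gt_nat (c : nat -> R) (x M : R) l :
  0 < x -> (forall i, 0 <= c i) -> (forall i, (1 <= i <= l)%N -> 1 + c i < x) ->
  c 0%N + M < x ->
  \sum_(i < l.+1) c i * x ^+ i + M < x ^+ l.+1.
Proof.
move=> x0 c0 cl cM; elim: l cl => [|l IH] cl.
  by rewrite big_ord1 expr0 mulr1 expr1.
have IH' := IH (fun i hi => cl i (ltac:(case/andP: hi => h1 h2; rewrite h1; exact: leqW h2))).
rewrite big_ord_recr /=.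
have X0 : 0 < x ^+ l.+1 by rewrite exprn_gt0.
have h : (1 + c l.+1) * x ^+ l.+1 < x * x ^+ l.+1.
  by rewrite ltr_pM2r // cl // leqnn.
rewrite mulrDl mul1r -exprS in h.
move: IH' h; set S := \sum_(_ < _) _; set X := x ^+ l.+1.
lra.
Qed.

Lemma poly_gt (m : nat) (hm : (0 < m)%N) (c : 'I_m -> R) (x M : R) :
  0 < x -> (forall i, 0 <= c i) ->
  (forall i : 'I_m, (1 <= i)%N -> 1 + c i < x) ->
  c (Ordinal hm) + M < x ->
  \sum_(i < m) c i * x ^+ i + M < x ^+ m.
Proof.
case: m hm c => // l hm c x0 c0 cl cM.
pose c' (i : nat) := c (inord i).
have -> : \sum_(i < l.+1) c i * x ^+ i = \sum_(i < l.+1) c' i * x ^+ i.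
  by apply: eq_bigr => i _; rewrite /c' inord_val.
apply: poly_gt_nat => //.
- by move=> i; rewrite /c'.
- move=> i /andP [h1 h2]; rewrite /c'; have := cl (inord i); rewrite inordK //.
  by apply; [].
- by rewrite /c' (_ : inord 0 = Ordinal hm) //; apply: val_inj; rewrite /= inordK.
Qed.

Section Parts.
Variables (m n : nat) (hm : (0 < m)%N) (hn : (0 < n)%N).
Variables (x : R) (c : 'I_m -> R) (b : 'I_n -> nat -> R) (r al : 'I_n -> R) (mj : 'I_n -> nat).
Hypotheses (x0 : 0 <= x) (c0 : forall i, 0 <= c i) (b0 : forall j k, 0 <= b j k)
  (r0 : forall j, 0 < r j) (al0 : forall j, 0 <= al j)
  (TRI : forall j, x <= al j + (r j)^-1)
  (MI : x ^+ m <= \sum_(i < m) c i * x ^+ i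
                  + \sum_(j < n) \sum_(1 <= k < (mj j).+1) b j k * r j ^+ k).

Lemma part1 : x <= Num.max (\big[Num.max/0]_(j < n) (1 + al j))
   (\sum_(j < n) \sum_(1 <= k < (mj j).+1) b j k + \sum_(i < m) c i).
Proof.
rewrite leNgt; apply/negP; rewrite gt_max => /andP [HA HS].
have Hj j : 1 + al j < x := le_lt_trans (le_bigmax 0 (fun j => 1 + al j) j) HA.
have x1 : 1 < x by have := Hj (Ordinal hn); have := al0 (Ordinal hn); lra.
have rj1 j : r j <= 1.
  have h := TRI j; have h2 := Hj j.
  have : 1 < (r j)^-1 by lra.
  by rewrite invf_gt1 // => /ltW.
set Bs := \sum_(j < n) \sum_(1 <= k < (mj j).+1) b j k.
have HB : \sum_(j < n) \sum_(1 <= k < (mj j).+1) b j k * r j ^+ k <= Bs.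
  apply: ler_sum => j _; apply: ler_sum => k _.
  by rewrite ler_piMr // exprn_ile1 // ltW.
set X := x ^+ m.-1.
have X1 : 1 <= X by rewrite exprn_ege1 // ltW.
have HC : \sum_(i < m) c i * x ^+ i <= (\sum_(i < m) c i) * X.
  rewrite mulr_suml; apply: ler_sum => i _; rewrite ler_wpM2l //.
  by apply: ler_weXn2l; [exact: ltW | rewrite -ltnS prednK].
have HXm : x ^+ m = x * X by rewrite /X -exprS prednK.
have B0 : 0 <= Bs by apply: sumr_ge0 => j _; apply: sumr_ge0 => k _.
have HBX : Bs <= Bs * X by rewrite ler_peMr.
have h : (Bs + \sum_(i < m) c i) * X < x * X.
  by rewrite ltr_pM2r // (lt_le_trans ltr01).
move: MI HB HC HBX h; rewrite HXm mulrDl.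
set S1 := \sum_(i < m) c i * x ^+ i.
set S2 := \sum_(j < n) \sum_(1 <= k < (mj j).+1) b j k * r j ^+ k.
set CX := (\sum_(i < m) c i) * X.
lra.
Qed.

Lemma part2_core :
  (forall j k, (1 <= k <= mj j)%N -> b j k * r j ^+ k <= 1) ->
  (forall i : 'I_m, (1 <= i)%N -> 1 + c i < x) ->
  c (Ordinal hm) + (\sum_(j < n) mj j)%:R < x -> False.
Proof.
move=> Q Hc H0.
have HB : \sum_(j < n) \sum_(1 <= k < (mj j).+1) b j k * r j ^+ k
          <= (\sum_(j < n) mj j)%:R.
  rewrite natr_sum; apply: ler_sum => j _.
  apply: le_trans (_ : \sum_(1 <= k < (mj j).+1) (1 : R) <= _).
    by apply: ler_sum_nat => k /andP [k1 k2]; apply: Q; rewrite k1 -ltnS.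
  by rewrite sumr_const_nat subn1.
have Mge0 : 0 <= (\sum_(j < n) mj j)%:R :> R by [].
have xp : 0 < x by have := c0 (Ordinal hm); lra.
have := poly_gt xp c0 Hc H0.
move: MI HB; set S1 := \sum_(i < m) _; set S2 := \sum_(j < n) _; set S3 := (_)%:R.
lra.
Qed.

Lemma part2a : (forall j, mj j = 1%N) ->
  x <= Num.max (\big[Num.max/0]_(j < n) (al j + b j 1%N))
        (Num.max (\big[Num.max/0]_(i < m | (1 <= i)%N) (1 + c i))
                 (c (Ordinal hm) + n%:R)).
Proof.
move=> h1; rewrite leNgt; apply/negP; rewrite !gt_max => /and3P [HA HC H0].
apply: part2_core.
- move=> j k; rewrite h1 -eqn_leq => /eqP <-; rewrite expr1.
  have h := TRI j; have h2 := le_lt_trans (le_bigmax 0 (fun j => al j + b j 1%N) j) HA.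
  have : b j 1%N < (r j)^-1 by lra.
  move=> hb; apply: ltW; rewrite -(mulVf (lt0r_neq0 (r0 j))).
  by rewrite ltr_pM2r.
- by move=> i hi; apply: le_lt_trans HC; apply: (le_bigmax_cond _ (fun i : 'I_m => 1 + c i)).
- by rewrite (eq_bigr (fun _ => 1%N)) // sum1_card card_ord.
Qed.

Lemma part2b :
  x <= Num.max (\big[Num.max/0]_(j < n) \big[Num.max/0]_(1 <= k < (mj j).+1)
                   (al j + b j k))
        (Num.max (\big[Num.max/0]_(j < n) (1 + al j))
          (Num.max (\big[Num.max/0]_(i < m | (1 <= i)%N) (1 + c i))
                   (c (Ordinal hm) + (\sum_(j < n) mj j)%:R))).
Proof.
rewrite leNgt; apply/negP; rewrite !gt_max => /and4P [HB HA HC H0].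
apply: part2_core => //.
- move=> j k /andP [k1 k2].
  have h := TRI j; have h2 := le_lt_trans (le_bigmax 0 (fun j => 1 + al j) j) HA.
  have h3 : al j + b j k < x.
    apply: le_lt_trans HB; apply: le_trans (le_bigmax 0 _ j).
    apply: (le_bigmax_seq 0 k xpredT (fun k => al j + b j k)) => //.
    by rewrite mem_index_iota k1 ltnS.
  have hb : b j k < (r j)^-1 by lra.
  have hr : r j <= 1.
    have : 1 < (r j)^-1 by lra.
    by rewrite invf_gt1 // => /ltW.
  have e1 : b j k * r j <= 1.
    by apply: ltW; rewrite -(mulVf (lt0r_neq0 (r0 j))) ltr_pM2r.
  have e2 : r j ^+ k.-1 <= 1 by rewrite exprn_ile1 // ltW.
  have -> : r j ^+ k = r j * r j ^+ k.-1 by rewrite -exprS prednK.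
  rewrite mulrA -[1]mulr1.
  by apply: ler_pM => //; rewrite ?mulr_ge0 ?exprn_ge0 // ltW.
- by move=> i hi; apply: le_lt_trans HC; apply: (le_bigmax_cond _ (fun i : 'I_m => 1 + c i)).
Qed.
End Parts.
End Real.

Section Real3.
Variable R : realType.

Lemma cs_step (A B C u v : R) : 0 <= A -> 0 <= C -> B ^+ 2 <= A * C ->
  2 * B * u * v <= A * v ^+ 2 + C * u ^+ 2.
Proof.
move=> A0 C0 h; have [A00|Ap] := eqVneq A 0.
  have : B ^+ 2 <= 0 by rewrite A00 mul0r in h.
  rewrite A00; have := sqr_ge0 B => h1 h2.
  have -> : B = 0 by apply/eqP; rewrite -sqrf_eq0 eq_le h2 h1.
  by rewrite !mulr0 !mul0r add0r mulr_ge0 // sqr_ge0.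
have Apos : 0 < A by rewrite lt_def Ap.
have h1 := sqr_ge0 (A * v - B * u).
have h2 : 0 <= (A * C - B ^+ 2) * u ^+ 2 by rewrite mulr_ge0 ?subr_ge0 ?sqr_ge0.
nra.
Qed.

Lemma cs_sq (I : Type) (s : seq I) (P : pred I) (u v : I -> R) :
  (\sum_(i <- s | P i) u i * v i) ^+ 2 <=
  (\sum_(i <- s | P i) u i ^+ 2) * (\sum_(i <- s | P i) v i ^+ 2).
Proof.
elim: s => [|h t IH]; first by rewrite !big_nil expr0n mul0r.
rewrite !big_cons; case: (P h) => //.
set B := \sum_(i <- t | P i) u i * v i.
set A := \sum_(i <- t | P i) u i ^+ 2.
set C := \sum_(i <- t | P i) v i ^+ 2.
have A0 : 0 <= A by apply: sumr_ge0 => i _; apply: sqr_ge0.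
have C0 : 0 <= C by apply: sumr_ge0 => i _; apply: sqr_ge0.
have := cs_step (u h) (v h) A0 C0 IH.
have -> : (u h * v h + B) ^+ 2 = u h ^+ 2 * v h ^+ 2 + 2 * B * u h * v h + B ^+ 2 by ring.
have -> : (u h ^+ 2 + A) * (v h ^+ 2 + C) =
  u h ^+ 2 * v h ^+ 2 + (A * v h ^+ 2 + C * u h ^+ 2) + A * C by ring.
move: IH; set t1 := 2 * B * u h * v h; set t2 := A * v h ^+ 2 + C * u h ^+ 2.
set t3 := u h ^+ 2 * v h ^+ 2; set t4 := B ^+ 2; set t5 := A * C; lra.
Qed.

Lemma cs (I : Type) (s : seq I) (P : pred I) (u v : I -> R) :
  \sum_(i <- s | P i) u i * v i <=
  Num.sqrt (\sum_(i <- s | P i) u i ^+ 2) * Num.sqrt (\sum_(i <- s | P i) v i ^+ 2).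
Proof.
have A0 : 0 <= \sum_(i <- s | P i) u i ^+ 2 by apply: sumr_ge0 => i _; apply: sqr_ge0.
have C0 : 0 <= \sum_(i <- s | P i) v i ^+ 2 by apply: sumr_ge0 => i _; apply: sqr_ge0.
set S := \sum_(i <- s | P i) u i * v i.
have [S0|S0] := leP S 0.
  by apply: le_trans S0 _; rewrite mulr_ge0 ?sqrtr_ge0.
rewrite -sqrtrM // -(ger0_norm (ltW S0)) -sqrtr_sqr.
by rewrite ler_wsqrtr // cs_sq.
Qed.

Lemma quad_final (x al be g E F : R) : 0 < E -> 0 <= F -> 0 <= g ->
  x * (F ^+ 2 + E ^+ 2) <= al * F ^+ 2 + be * E ^+ 2 + g * F * E ->
  x <= (al + be + Num.sqrt ((al - be) ^+ 2 + g ^+ 2)) / 2.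
Proof.
move=> E0 F0 g0 H.
set s := Num.sqrt _.
have s0 : 0 <= s by apply: sqrtr_ge0.
have s2 : s ^+ 2 = (al - be) ^+ 2 + g ^+ 2 by rewrite sqr_sqrtr // addr_ge0 ?sqr_ge0.
have sab : `|al - be| <= s.
  rewrite -(ler_pXn2r (_ : (0 < 2)%N)) ?nnegrE // (real_normK (num_real _)) s2.
  by rewrite lerDl sqr_ge0.
move: sab; rewrite ler_norml => /andP [s1 s2'].
rewrite leNgt; apply/negP => HL.
set P := x - al; set Q := x - be.
have P0 : 0 < P by rewrite /P; lra.
have Q0 : 0 < Q by rewrite /Q; lra.
have PQ : g ^+ 2 < 4 * P * Q.
  have h1 : (be - al + s) / 2 < P by rewrite /P; lra.
  have h2 : (al - be + s) / 2 < Q by rewrite /Q; lra.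
  have h3 : 0 <= (be - al + s) / 2 by lra.
  have h4 : 0 <= (al - be + s) / 2 by lra.
  have h5 : (be - al + s) / 2 * ((al - be + s) / 2) < P * Q.
    by apply: ltr_pM.
  have -> : g ^+ 2 = 4 * ((be - al + s) / 2 * ((al - be + s) / 2)).
    by rewrite -[g ^+ 2](addKr ((al - be) ^+ 2)) -s2; field.
  by rewrite -[4 * P * Q]mulrA ltr_pM2l.
have H' : P * F ^+ 2 + Q * E ^+ 2 <= g * F * E by rewrite /P /Q; lra.
have h6 := sqr_ge0 (2 * P * F - g * E).
have h7 : 0 < (4 * P * Q - g ^+ 2) * E ^+ 2 by rewrite mulr_gt0 ?subr_gt0 ?exprn_gt0.
have h8 : 4 * P * (P * F ^+ 2 + Q * E ^+ 2 - g * F * E) =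
          (2 * P * F - g * E) ^+ 2 + (4 * P * Q - g ^+ 2) * E ^+ 2 by ring.
have h9 : 0 < P * F ^+ 2 + Q * E ^+ 2 - g * F * E.
  have : 0 < 4 * P * (P * F ^+ 2 + Q * E ^+ 2 - g * F * E) by rewrite h8; lra.
  by rewrite pmulr_rgt0 // mulr_gt0.
lra.
Qed.

Lemma amgm2 (a bb p q : R) : 0 < p -> 0 < q ->
  2 * (bb * a) <= a ^+ 2 / p * q + bb ^+ 2 / q * p.
Proof.
move=> p0 q0.
have h : 0 <= (a * q - bb * p) ^+ 2 / (p * q) by rewrite divr_ge0 ?sqr_ge0 ?mulr_ge0 ?ltW.
have e : a ^+ 2 / p * q + bb ^+ 2 / q * p - 2 * (bb * a) = (a * q - bb * p) ^+ 2 / (p * q).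
  by field; rewrite lt0r_neq0 ?lt0r_neq0.
by rewrite -subr_ge0 e.
Qed.

Lemma path_ineq (K : nat) (f : nat -> R) : (0 < K)%N ->
  \sum_(2 <= k < K.+1) f k * f k.-1 <=
  cos (pi / (K.+1)%:R) * \sum_(1 <= k < K.+1) f k ^+ 2.
Proof.
move=> K0.
set th := pi / (K.+1)%:R.
have th0 : 0 < th by rewrite divr_gt0 ?pi_gt0 // ltr0n.
pose s (k : nat) := sin (k%:R * th).
have s0 : s 0%N = 0 by rewrite /s mul0r sin0.
have sK : s K.+1 = 0 by rewrite /s /th mulrC divfK ?sinpi // pnatr_eq0.
have spos k : (1 <= k <= K)%N -> 0 < s k.
  move=> /andP [k1 k2]; apply: sin_gt0_pi; apply/andP; split.
    by rewrite mulr_gt0 // ltr0n.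
  rewrite /th mulrA ltr_pdivrMr ?ltr0n // mulrC ltr_pM2l ?pi_gt0 //.
  by rewrite ltr_nat ltnS.
have srec k : (1 <= k)%N -> s k.-1 + s k.+1 = 2 * cos th * s k.
  move=> k1; rewrite /s -(prednK k1).
  set a := k.-1.+1%:R * th.
  have e1 : k.-1%:R * th = a - th by rewrite /a -addn1 natrD mulrDl mul1r addrK.
  have e2 : k.-1.+2%:R * th = a + th by rewrite /a -(addn1 k.-1.+1) natrD mulrDl mul1r.
  by rewrite /= e1 e2 sinB sinD; ring.
pose w (k : nat) := f k ^+ 2 / s k.
have edge k : (2 <= k <= K)%N -> 2 * (f k * f k.-1) <= w k.-1 * s k + w k * s k.-1.
  move=> /andP [k2 kK].
  have hk1 : 0 < s k.-1 by apply: spos; rewrite -ltnS prednK ?k2 //= ?(leq_trans _ kK) ?leq_pred // (leq_trans _ k2).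
  have hk : 0 < s k by apply: spos; rewrite (leq_trans _ k2) ?kK.
  by rewrite /w; apply: amgm2.
have H1 : 2 * \sum_(2 <= k < K.+1) f k * f k.-1 <=
          \sum_(2 <= k < K.+1) (w k.-1 * s k + w k * s k.-1).
  rewrite mulr_sumr; apply: ler_sum_nat => k /andP [k2 kK]; apply: edge.
  by rewrite k2 -ltnS.
rewrite big_split /= in H1.
have E1 : \sum_(2 <= k < K.+1) w k.-1 * s k = \sum_(1 <= k < K.+1) w k * s k.+1.
  rewrite big_add1 /=.
  by rewrite [in RHS]big_nat_recr //= sK mulr0 addr0.
have E2 : \sum_(2 <= k < K.+1) w k * s k.-1 = \sum_(1 <= k < K.+1) w k * s k.-1.
  by rewrite [in RHS]big_ltn ?ltnS // s0 mulr0 add0r.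
rewrite E1 E2 -big_split /= in H1.
have E3 : \sum_(1 <= k < K.+1) (w k * s k.+1 + w k * s k.-1) =
          2 * cos th * \sum_(1 <= k < K.+1) f k ^+ 2.
  rewrite mulr_sumr; apply: eq_big_nat => k /andP [k1 kK].
  rewrite -mulrDr addrC srec // /w.
  have : s k != 0 by rewrite lt0r_neq0 // spos // k1 -ltnS.
  by move=> hs; field.
rewrite E3 in H1.
have h2 : (0 : R) < 2 by [].
move: H1; rewrite -mulrA ler_pM2l //.
Qed.
End Real3.

Section P3.
Variable R : realType.

Lemma term_le_sum (I : finType) (F : I -> R) i :
  (forall j, 0 <= F j) -> F i <= \sum_j F j.
Proof. by move=> h; rewrite (bigD1 i) //= lerDl sumr_ge0. Qed.

Lemma le_sqrt_sq (a S : R) : 0 <= a -> a ^+ 2 <= S -> a <= Num.sqrt S.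
Proof.
move=> a0 h; rewrite -(ger0_norm a0) -sqrtr_sqr; exact: ler_wsqrtr.
Qed.

Variables (m n : nat) (hm : (0 < m)%N) (hn : (0 < n)%N).
Variables (x : R) (c : 'I_m -> R) (b : 'I_n -> nat -> R) (r al : 'I_n -> R) (mj : 'I_n -> nat).
Hypotheses (x0 : 0 <= x) (c0 : forall i, 0 <= c i) (b0 : forall j k, 0 <= b j k)
  (r0 : forall j, 0 < r j) (mj0 : forall j, (0 < mj j)%N)
  (TRI : forall j, x <= al j + (r j)^-1)
  (MI : x ^+ m <= \sum_(i < m) c i * x ^+ i
                  + \sum_(j < n) \sum_(1 <= k < (mj j).+1) b j k * r j ^+ k).
Variable be : R.
Hypothesis HBETA : forall u : 'I_m -> R,
  \sum_(k < m) (\sum_(i < m) u i * compB0 c i k) * u k <= be * \sum_(i < m) u i ^+ 2.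

Let T := \sum_(j < n) \sum_(1 <= k < (mj j).+1) b j k * r j ^+ k.
Let E2 := \sum_(i < m) (x ^+ i) ^+ 2.
Let Q := \sum_(k < m) (\sum_(i < m) x ^+ i * compB0 c i k) * x ^+ k.

Lemma T0 : 0 <= T.
Proof.
by apply: sumr_ge0 => j _; apply: sumr_ge0 => k _; apply: mulr_ge0 => //; apply: exprn_ge0; apply: ltW.
Qed.

Lemma stepA : x * E2 <= Q + x ^+ m.-1 * T.
Proof.
have hQ : Q = \sum_(i < m) x ^+ i * \sum_(k < m) compB0 c i k * x ^+ k.
  rewrite /Q; under eq_bigr => k _ do rewrite mulr_suml.
  rewrite exchange_big /=; apply: eq_bigr => i _; rewrite mulr_sumr.
  by apply: eq_bigr => k _; rewrite mulrA.
have row (i : 'I_m) : x * (x ^+ i) ^+ 2 <=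
    x ^+ i * (\sum_(k < m) compB0 c i k * x ^+ k)
    + (if (i.+1 == m)%N then x ^+ i * T else 0).
  rewrite /compB0; under eq_bigr => k _ do rewrite mxE.
  have exi : x * (x ^+ i) ^+ 2 = x ^+ i * x ^+ i.+1 by rewrite [x ^+ i.+1]exprS expr2 mulrCA.
  case: eqP => him.
    rewrite exi him -mulrDr ler_wpM2l ?exprn_ge0 //.
  rewrite addr0 exi.
  have hi : (i.+1 < m)%N by rewrite ltn_neqAle ltn_ord andbT; apply/eqP.
  rewrite (bigD1 (Ordinal hi)) //= eqxx mul1r big1 ?addr0 //.
  move=> k hk; rewrite ifF ?mul0r //; apply/negbTE; apply: contra hk => /eqP h.
  by apply/eqP/val_inj.
have hm1 : (m.-1 < m)%N by rewrite prednK.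
have hsum : \sum_(i < m) (if (i.+1 == m)%N then x ^+ i * T else 0) = x ^+ m.-1 * T.
  rewrite (bigD1 (Ordinal hm1)) //= prednK // eqxx big1 ?addr0 //.
  move=> i hi; rewrite ifF //; apply/negbTE; apply: contra hi => /eqP h.
  by apply/eqP/val_inj => /=; exact: (congr1 predn h).
rewrite hQ -hsum -big_split /= /E2 mulr_sumr; apply: ler_sum => i _; exact: row.
Qed.

Let Fj (j : 'I_n) := \sum_(1 <= k < (mj j).+1) (r j ^+ k) ^+ 2.
Let F2 := \sum_(j < n) Fj j.
Let alpha := \big[Num.max/0]_(j < n) (al j + cos (pi / ((mj j).+1)%:R)).

Lemma Fj0 j : 0 <= Fj j.
Proof. by apply: sumr_ge0 => k _; apply: sqr_ge0. Qed.

Lemma Fj_first j : r j ^+ 2 <= Fj j.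
Proof.
rewrite /Fj big_ltn ?ltnS ?mj0 // expr1 lerDl.
by apply: sumr_ge0 => k _; apply: sqr_ge0.
Qed.

Lemma stepB_j j : x * Fj j <= (al j + cos (pi / ((mj j).+1)%:R)) * Fj j + r j.
Proof.
have rj0 : r j != 0 by rewrite lt0r_neq0.
have h1 : x * Fj j <= \sum_(1 <= k < (mj j).+1) (al j + (r j)^-1) * (r j ^+ k) ^+ 2.
  by rewrite /Fj mulr_sumr; apply: ler_sum => k _; rewrite ler_wpM2r ?sqr_ge0.
have h2 : \sum_(1 <= k < (mj j).+1) (al j + (r j)^-1) * (r j ^+ k) ^+ 2 =
    al j * Fj j + (r j + \sum_(2 <= k < (mj j).+1) r j ^+ k * r j ^+ k.-1).
  rewrite /Fj; under eq_bigr => k _ do rewrite mulrDl.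
  rewrite big_split /= -mulr_sumr; congr (_ + _).
  rewrite big_ltn ?ltnS ?mj0 //.
  have -> : (r j)^-1 * (r j ^+ 1) ^+ 2 = r j by rewrite expr1; field.
  congr (_ + _); apply: eq_big_nat => k /andP [k2 _].
  case: k k2 => // k' _; rewrite /= [r j ^+ k'.+1]exprS; set y := r j ^+ k'.
  by field.
have h3 := path_ineq (fun k => r j ^+ k) (mj0 j).
rewrite /= -/(Fj j) in h3.
move: h1 h3; rewrite h2.
set S := \sum_(2 <= k < (mj j).+1) _; set cc := cos _; set FF := Fj j.
have -> : (al j + cc) * FF = al j * FF + cc * FF by ring.
set t1 := al j * FF; set t2 := cc * FF; lra.
Qed.

Lemma stepB : x * F2 <= alpha * F2 + \sum_(j < n) r j.
Proof.
rewrite /F2 mulr_sumr mulr_sumr -big_split /=; apply: ler_sum => j _.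
apply: le_trans (stepB_j j) _; rewrite lerD2r ler_wpM2r ?Fj0 //.
exact: (le_bigmax 0 (fun j => al j + cos (pi / ((mj j).+1)%:R)) j).
Qed.

Let gamma := Num.sqrt ((\sum_(j < n) mj j)%:R : R).
Let delta := Num.sqrt (\sum_(j < n) \sum_(1 <= k < (mj j).+1) b j k ^+ 2).

Lemma F20 : 0 <= F2.
Proof. by apply: sumr_ge0 => j _; apply: Fj0. Qed.

Lemma stepC : \sum_(j < n) r j <= gamma * Num.sqrt F2.
Proof.
have h := @cs R 'I_n (index_enum 'I_n) xpredT (fun _ => 1) r.
rewrite /= in h; under eq_bigr => j _ do rewrite -[r j]mul1r.
apply: le_trans h _; apply: ler_pM; rewrite ?sqrtr_ge0 //.
  apply: ler_wsqrtr; under eq_bigr => j _ do rewrite expr1n.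
  rewrite sumr_const card_ord ler_nat.
  rewrite -[X in (X <= _)%N]card_ord -sum1_card; apply: leq_sum => j _; exact: mj0.
by apply: ler_wsqrtr; apply: ler_sum => j _; apply: Fj_first.
Qed.

Lemma stepD : T <= delta * Num.sqrt F2.
Proof.
pose Bj (j : 'I_n) := \sum_(1 <= k < (mj j).+1) b j k ^+ 2.
have Bj0 j : 0 <= Bj j by apply: sumr_ge0 => k _; apply: sqr_ge0.
have h1 : T <= \sum_(j < n) Num.sqrt (Bj j) * Num.sqrt (Fj j).
  apply: ler_sum => j _.
  have := @cs R nat (index_iota 1 (mj j).+1) xpredT (b j) (fun k => r j ^+ k).
  by [].
apply: le_trans h1 _.
have h2 := @cs R 'I_n (index_enum 'I_n) xpredT (fun j => Num.sqrt (Bj j))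
   (fun j => Num.sqrt (Fj j)).
rewrite /= in h2; apply: le_trans h2 _.
under eq_bigr => j _ do rewrite sqr_sqrtr ?Bj0 //.
under [X in _ * Num.sqrt X]eq_bigr => j _ do rewrite sqr_sqrtr ?Fj0 //.
by [].
Qed.

Lemma part3_real :
  x <= (alpha + be + Num.sqrt ((alpha - be) ^+ 2 + (gamma + delta) ^+ 2)) / 2.
Proof.
have E21 : 1 <= E2.
  rewrite /E2 (bigD1 (Ordinal hm)) //= expr0 expr1n lerDl.
  by apply: sumr_ge0 => i _; apply: sqr_ge0.
set E := Num.sqrt E2; set F := Num.sqrt F2.
have E1 : 1 <= E by rewrite -sqrtr1 ler_wsqrtr.
have E0 : 0 < E by apply: lt_le_trans E1.
have F0 : 0 <= F by apply: sqrtr_ge0.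
have EE : E ^+ 2 = E2 by rewrite sqr_sqrtr // (le_trans ler01).
have FF : F ^+ 2 = F2 by rewrite sqr_sqrtr // F20.
have g0 : 0 <= gamma + delta by rewrite addr_ge0 ?sqrtr_ge0.
apply: quad_final E0 F0 g0 _.
have hA := stepA.
have hB := stepB.
have hC := stepC.
have hD := stepD.
have hQ : Q <= be * E2 := HBETA (fun i => x ^+ i).
have hxm : x ^+ m.-1 <= E.
  apply: le_sqrt_sq; first exact: exprn_ge0.
  have hm1 : (m.-1 < m)%N by rewrite prednK.
  rewrite /E2; apply: (@term_le_sum _ (fun i : 'I_m => (x ^+ i) ^+ 2) (Ordinal hm1)) => j; apply: sqr_ge0.
have hT : x ^+ m.-1 * T <= E * (delta * F).
  by apply: ler_pM; rewrite ?exprn_ge0 ?T0.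
have hC' : \sum_(j < n) r j <= gamma * F * E.
  apply: le_trans hC _; rewrite -[X in X <= _]mulr1 ler_wpM2l //.
  by rewrite mulr_ge0 ?sqrtr_ge0.
rewrite FF EE.
move: hA hB hQ hT hC'.
set S := \sum_(j < n) r j; set XT := x ^+ m.-1 * T.
have -> : x * (F2 + E2) = x * F2 + x * E2 by ring.
have -> : (gamma + delta) * F * E = gamma * F * E + E * (delta * F) by ring.
set a1 := x * F2; set a2 := x * E2; set a3 := alpha * F2; set a4 := be * E2.
set a5 := gamma * F * E; set a6 := E * (delta * F).
lra.
Qed.
End P3.

Section Cx.
Variable R : realType.

Lemma cabs_sum (I : Type) (s : seq I) (P : pred I) (F : I -> R[i]) :
  cabs (\sum_(i <- s | P i) F i) <= \sum_(i <- s | P i) cabs (F i).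
Proof.
apply: (big_rec2 (fun a b => cabs a <= b)); first by rewrite cabs0.
by move=> i y1 y2 _ H; apply: le_trans (cabsD _ _) _; rewrite lerD2l.
Qed.

Lemma cabs_conj (z : R[i]) : cabs (conjc z) = cabs z.
Proof. by case: z => a b; rewrite /cabs /= sqrrN. Qed.

Lemma conj_mul (z : R[i]) : conjc z * z = rC (cabs z ^+ 2).
Proof.
case: z => a b; rewrite /cabs /= sqr_sqrtr ?addr_ge0 ?sqr_ge0 // /rC.
by apply/eqP; rewrite eq_complex /=; apply/andP; split; apply/eqP; ring.
Qed.

Lemma rCM (a b : R) : rC a * rC b = rC (a * b).
Proof. by rewrite /rC rmorphM. Qed.
Lemma rC_sum (I : Type) (s : seq I) (P : pred I) (F : I -> R) :
  \sum_(i <- s | P i) rC (F i) = rC (\sum_(i <- s | P i) F i).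
Proof. by rewrite /rC rmorph_sum. Qed.
Lemma conj_rC (a : R) : conjc (rC a) = rC a.
Proof. by rewrite /rC /= oppr0. Qed.
Lemma rC_inj (a b : R) : rC a = rC b -> a = b.
Proof. by case. Qed.

Lemma quad_entry (q : nat) (A : 'M[R[i]]_q) (x : 'cV[R[i]]_q) :
  (ctrmx x *m A *m x) 0 0 = \sum_(k < q) (\sum_(i < q) conjc (x i 0) * A i k) * x k 0.
Proof.
rewrite !mxE; apply: eq_bigr => k _; rewrite !mxE; congr (_ * _).
by apply: eq_bigr => i _; rewrite !mxE.
Qed.

Lemma norm_entry (q : nat) (x : 'cV[R[i]]_q) :
  (ctrmx x *m x) 0 0 = \sum_(i < q) conjc (x i 0) * x i 0.
Proof. by rewrite !mxE; apply: eq_bigr => i _; rewrite !mxE. Qed.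

Lemma numrad_ub (q : nat) (A : 'M[R[i]]_q) :
  has_ubound [set r : R | exists x : 'cV[R[i]]_q,
         (ctrmx x *m x) 0 0 = 1 /\ r = cabs ((ctrmx x *m A *m x) 0 0)]%classic.
Proof.
exists (\sum_(k < q) \sum_(i < q) cabs (A i k)) => r [x [h1 ->]].
have hx i : cabs (x i 0) <= 1.
  move: h1; rewrite norm_entry; under eq_bigr => j _ do rewrite conj_mul.
  rewrite rC_sum -/(rC 1) => /rC_inj hs.
  have : cabs (x i 0) ^+ 2 <= 1.
    rewrite -hs (bigD1 i) //= lerDl; apply: sumr_ge0 => j _; exact: sqr_ge0.
  have := cabs_ge0 (x i 0); nra.
rewrite quad_entry; apply: le_trans (cabs_sum _ _ _) _; apply: ler_sum => k _.
rewrite cabsM; apply: le_trans (_ : _ <= cabs (\sum_(i < q) conjc (x i 0) * A i k) * 1) _.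
  by rewrite ler_wpM2l ?cabs_ge0.
rewrite mulr1; apply: le_trans (cabs_sum _ _ _) _; apply: ler_sum => i _.
rewrite cabsM cabs_conj; rewrite -[X in _ <= X]mul1r ler_wpM2r ?cabs_ge0 //.
Qed.

Lemma numrad_lb (q : nat) (M : 'M[R]_q) (u : 'I_q -> R) :
  \sum_(k < q) (\sum_(i < q) u i * M i k) * u k <=
  numrad (map_mx (@rC R) M) * \sum_(i < q) u i ^+ 2.
Proof.
set S := \sum_(i < q) u i ^+ 2.
have S0 : 0 <= S by apply: sumr_ge0 => i _; apply: sqr_ge0.
have [Sz|Snz] := eqVneq S 0.
  have u0 i : u i = 0.
    have := @psumr_eq0P _ _ xpredT (fun j => u j ^+ 2) (fun j _ => sqr_ge0 (u j)) Sz i isT.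
    by move/eqP; rewrite sqrf_eq0 => /eqP.
  rewrite Sz mulr0 big1 // => k _; by rewrite u0 mulr0.
have Sp : 0 < S by rewrite lt_def Snz.
set s := Num.sqrt S.
have sp : 0 < s by rewrite sqrtr_gt0.
have ss : s * s = S by rewrite -expr2 sqr_sqrtr.
pose xv : 'cV[R[i]]_q := \col_i rC (u i / s).
have h1 : (ctrmx xv *m xv) 0 0 = 1.
  rewrite norm_entry; under eq_bigr => i _ do rewrite !mxE conj_rC rCM.
  rewrite rC_sum -/(rC 1); congr rC.
  under eq_bigr => i _ do rewrite -expr2 expr_div_n.
  by rewrite -mulr_suml -/S expr2 ss divff // lt0r_neq0.
set Qu := \sum_(k < q) (\sum_(i < q) u i * M i k) * u k.
have h2 : (ctrmx xv *m map_mx (@rC R) M *m xv) 0 0 = rC (Qu / S).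
  rewrite quad_entry.
  under eq_bigr => k _ do (under eq_bigr => i _ do rewrite !mxE conj_rC rCM;
                          rewrite rC_sum !mxE rCM).
  rewrite rC_sum; congr rC; rewrite /Qu mulr_suml; apply: eq_bigr => k _.
  rewrite -[in RHS]ss.
  have -> : \sum_(i < q) u i / s * M i k = (\sum_(i < q) u i * M i k) / s.
    by rewrite mulr_suml; apply: eq_bigr => i _; rewrite mulrAC.
  by field; rewrite lt0r_neq0.
have h3 : Qu / S <= numrad (map_mx (@rC R) M).
  apply: le_trans (ler_norm _) _; rewrite -cabs_real -h2.
  by apply: (ub_le_sup (numrad_ub _)); exists xv.
by rewrite -ler_pdivrMr.
Qed.
End Cx.

Section Main.
Variables (R : realType) (p : nat) (hp : (0 < p)%N) (nu : 'cV[R[i]]_p -> R) (hnu : is_vnorm nu).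

Lemma N_ge0 (A : 'M[R[i]]_p) : 0 <= induced_norm nu A.
Proof.
pose z : 'cV[R[i]]_p := delta_mx (Ordinal hp) 0.
have zn0 : z != 0.
  apply/eqP => /matrixP /(_ (Ordinal hp) 0); rewrite !mxE !eqxx /= => /eqP.
  by rewrite oner_eq0.
have nzp : 0 < nu z.
  by rewrite lt_def nu_ge0 // andbT; apply: contra zn0 => /eqP /(nu_eq0 hnu) ->.
have := induced_ub hnu hp A z.
have := nu_ge0 hnu (A *m z).
move=> h1 h2; have : 0 <= induced_norm nu A * nu z by apply: le_trans h1 h2.
by rewrite pmulr_lge0.
Qed.

Variables (m n : nat) (C : 'I_m -> 'M[R[i]]_p) (a : 'I_n -> R[i])
  (mj : 'I_n -> nat) (B : 'I_n -> nat -> 'M[R[i]]_p) (lam0 : R[i]).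
Hypothesis heig : is_eigenvalue C a mj B lam0.

Lemma MI_derive :
  cabs lam0 ^+ m <= \sum_(i < m) induced_norm nu (C i) * cabs lam0 ^+ i
   + \sum_(j < n) \sum_(1 <= k < (mj j).+1)
        induced_norm nu (B j k) * (cabs (lam0 - a j))^-1 ^+ k.
Proof.
case: heig => hne [v [vn0 hv]].
have nvp : 0 < nu v.
  by rewrite lt_def nu_ge0 // andbT; apply: contra vn0 => /eqP /(nu_eq0 hnu) ->.
pose w := rC (nu v)^-1 *: v.
have nw : nu w = 1.
  by rewrite nuZ // cabs_real ger0_norm ?invr_ge0 ?(nu_ge0 hnu) // mulVf ?lt0r_neq0.
have hw : Rmat C a mj B lam0 *m w = 0 by rewrite /w -scalemxAr hv scaler0.
rewrite /Rmat mulmxDl mulmxBl in hw.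
move/eqP: hw; rewrite addr_eq0 subr_eq => /eqP hX.
have LHS : nu ((lam0 ^+ m *: 1%:M) *m w) = cabs lam0 ^+ m.
  by rewrite -scalemxAl mul1mx nuZ // nw mulr1 cabsX.
rewrite -LHS hX; apply: le_trans (nuD hnu _ _) _; rewrite nuN // addrC.
apply: lerD.
  rewrite mulmx_suml; apply: le_trans (nu_sum hnu _ _ _) _; apply: ler_sum => i _.
  rewrite -scalemxAl nuZ // cabsX mulrC ler_wpM2r ?exprn_ge0 ?cabs_ge0 //.
  by apply: le_trans (induced_ub hnu hp _ _) _; rewrite nw mulr1.
rewrite mulmx_suml; apply: le_trans (nu_sum hnu _ _ _) _; apply: ler_sum => j _.
rewrite mulmx_suml; apply: le_trans (nu_sum hnu _ _ _) _; apply: ler_sum => k _.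
rewrite -scalemxAl nuZ // cabsV cabsX -exprVn mulrC ler_wpM2r ?exprn_ge0 ?invr_ge0 ?cabs_ge0 //.
by apply: le_trans (induced_ub hnu hp _ _) _; rewrite nw mulr1.
Qed.
End Main.

Unset Implicit Arguments.
Set Strict Implicit.

Theorem theorem3p9 (R : realType) (p m n : nat) (hp : (0 < p)%N) (hm : (0 < m)%N)
  (hn : (0 < n)%N)
  (a : 'I_n -> R[i]) (a_inj : injective a)
  (mj : 'I_n -> nat) (mj_pos : forall j, (0 < mj j)%N)
  (C : 'I_m -> 'M[R[i]]_p) (B : 'I_n -> nat -> 'M[R[i]]_p)
  (nu : 'cV[R[i]]_p -> R) (hnu : is_vnorm nu)
  (lam0 : R[i]) (heig : is_eigenvalue C a mj B lam0) :
  let N := induced_norm nu in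
  let C0 := C (Ordinal hm) in
  let mxr : R -> R -> R := Num.max in
  (* (1) *)
  [/\ cabs lam0 <=
        mxr (\big[mxr/0]_(j < n) (1 + cabs (a j)))
            (\sum_(j < n) \sum_(1 <= k < (mj j).+1) N (B j k)
             + \sum_(i < m) N (C i)),
  (* (2), case all m_j = 1 *)
      (forall j, mj j = 1%N) ->
      cabs lam0 <=
        mxr (\big[mxr/0]_(j < n) (cabs (a j) + N (B j 1%N)))
          (mxr (\big[mxr/0]_(i < m | (1 <= i)%N) (1 + N (C i)))
               (N C0 + n%:R)),
  (* (2), otherwise *)
      ~ (forall j, mj j = 1%N) ->
      cabs lam0 <=
        mxr (\big[mxr/0]_(j < n) \big[mxr/0]_(1 <= k < (mj j).+1)
                 (cabs (a j) + N (B j k)))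
          (mxr (\big[mxr/0]_(j < n) (1 + cabs (a j)))
            (mxr (\big[mxr/0]_(i < m | (1 <= i)%N) (1 + N (C i)))
                 (N C0 + (\sum_(j < n) mj j)%:R)))
  (* (3) *)
    & let alpha := \big[mxr/0]_(j < n) (cabs (a j) + cos (pi / ((mj j).+1)%:R)) in
      let beta := numrad (map_mx (@rC R) (compB0 (fun i => N (C i)))) in
      let gamma := Num.sqrt ((\sum_(j < n) mj j)%:R : R) in
      let delta := Num.sqrt (\sum_(j < n) \sum_(1 <= k < (mj j).+1) N (B j k) ^+ 2) in
      cabs lam0 <= (alpha + beta
                    + Num.sqrt ((alpha - beta) ^+ 2 + (gamma + delta) ^+ 2)) / 2].
Proof.
move=> N C0 mxr.
pose x := cabs lam0.
pose c := fun i => N (C i).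
pose b := fun j k => N (B j k).
pose r := fun j => (cabs (lam0 - a j))^-1.
pose al := fun j => cabs (a j).
have x0 : 0 <= x by apply: cabs_ge0.
have c0 : forall i, 0 <= c i by move=> i; apply: N_ge0.
have b0 : forall j k, 0 <= b j k by move=> j k; apply: N_ge0.
have al0 : forall j, 0 <= al j by move=> j; apply: cabs_ge0.
have r0 : forall j, 0 < r j.
  move=> j; rewrite /r invr_gt0 lt_def cabs_ge0 andbT; apply/eqP => h.
  have := cabs_eq0 h; move/eqP; rewrite subr_eq0; case: heig => hne _.
  by rewrite (negbTE (hne j)).
have TRI : forall j, x <= al j + (r j)^-1.
  move=> j; rewrite /r invrK /x /al.
  by apply: le_trans (cabsD _ _); rewrite addrC subrK.
have MI := MI_derive hp hnu heig.
have MI' : x ^+ m <= \sum_(i < m) c i * x ^+ i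
   + \sum_(j < n) \sum_(1 <= k < (mj j).+1) b j k * r j ^+ k by exact: MI.
split.
- exact: (part1 hm hn c0 b0 r0 al0 TRI MI').
- move=> h1; exact: (part2a hm c0 r0 TRI MI' h1).
- move=> _; exact: (part2b hm c0 b0 r0 TRI MI').
- move=> alpha beta gamma delta.
  have HB : forall u : 'I_m -> R,
    \sum_(k < m) (\sum_(i < m) u i * compB0 c i k) * u k <=
    numrad (map_mx (@rC R) (compB0 c)) * \sum_(i < m) u i ^+ 2.
    by move=> u; apply: numrad_lb.
  exact: (part3_real hm x0 b0 r0 mj_pos TRI MI' HB).
Qed.
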